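(* Let $s\ge 2$ and $p\ge 2$ be integers and define \[G_{s,p}(x)=\frac{x(x^s-1)^p-(x^s-x)^p}{x(x-1)^p},\] which is a polynomial in $\mathbb{Z}[x]$. Then $G_{s,2}(x)$ divides $G_{s,p}(x)$ if and only if $p\equiv 2 \pmod{2(2s-1)}$.
   Context: $G_{s,p}(x)$ is (after the substitution $x=1-q$) the non-linear factor of the chromatic polynomial of the theta-graph $\Theta^{s,p}$, the graph on $2+p(s-1)$ vertices obtained from $p$ disjoint paths of length $s$ by identifying all their left-hand endpoints and all their right-hand endpoints. *)

(* Defs.v *)
From mathcomp Require Import all_boot all_order all_algebra.
Set Implicit Arguments. Unset Strict Implicit. Unset Printing Implicit Defensive.
Import GRing.Theory.
Local Open Scope ring_scope.

Definition Gnum (s p : nat) : {poly int} :=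
  'X * ('X ^+ s - 1) ^+ p - ('X ^+ s - 'X) ^+ p.

(* Denominator  x (x - 1)^p, a monic polynomial, so %/ is exact division. *)
Definition Gden (p : nat) : {poly int} := 'X * ('X - 1) ^+ p.

Definition G (s p : nat) : {poly int} := Gnum s p %/ Gden p.

Definition dvdZx (a b : {poly int}) : Prop := exists q : {poly int}, b = q * a.

(* Main.v *)
Require Import Defs.
From mathcomp Require Import all_boot all_order all_algebra all_field ring zify.
Import GRing.Theory.
Local Open Scope ring_scope.

Lemma key (R : comPzRingType) (x : R) s p : (0 < s)%N ->
  x*(x^+s-1)^+p.+1 - (x^+s - x)^+p.+1 =
  x*(x-1)^+p.+1 * ((\sum_(i<s) x^+i)^+p.+1 - x^+p * (\sum_(i<s.-1) x^+i)^+p.+1).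
Proof.
case: s => // s _ /=.
have hS := subrX1 x s.+1.
have hT : x^+s.+1 - x = x * (x-1) * \sum_(i<s) x^+i.
  by rewrite -mulrA -subrX1 mulrBr mulr1 exprS.
rewrite hS hT; set S := \sum_(i<s.+1) _; set T := \sum_(i<s) _.
rewrite !exprMn !exprS.
set a := (x-1)^+p; set b := S^+p; set c := T^+p; set d := x^+p; set e := x^+s.
ring.
Qed.

Definition Sp (s : nat) : {poly int} := \sum_(i<s) 'X^i.
Definition Gf s p : {poly int} := (Sp s)^+p - 'X ^+ p.-1 * (Sp s.-1)^+p.

Lemma Gden_monic p : Gden p \is monic.
Proof. by rewrite /Gden monicMl ?monicX // monic_exp // -polyC1 monicXsubC. Qed.

Lemma GE s p : (0 < s)%N -> (0 < p)%N -> G s p = Gf s p.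
Proof.
move=> s0; case: p => // p _.
rewrite /G /Gnum /Gden key //.
by rewrite mulrC (Pdiv.IdomainMonic.mulpK (Gden_monic p.+1)).
Qed.

Lemma phiE (R : idomainType) (x : R) s : (2 <= s)%N -> x != 0 -> x - 1 != 0 ->
  (x - 1) * ((\sum_(i<s) x^+i)^+2 - x * (\sum_(i<s.-1) x^+i)^+2) = x^+(2*s-1) - 1.
Proof.
move=> s2 x0 x1.
have k := @key _ x s 1 (ltnW s2).
rewrite expr1 in k.
have e : x^+s * x^+s = x * x^+(2*s-1).
  rewrite -exprD -exprS; congr (_ ^+ _); case: s s2 {k} => // s _; lia.
have h : x * (x ^+ s - 1) ^+ 2 - (x ^+ s - x) ^+ 2 = x * (x-1) * (x^+(2*s-1) - 1).
  apply/eqP; rewrite -subr_eq0.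
  have -> : x * (x ^+ s - 1) ^+ 2 - (x ^+ s - x) ^+ 2 - x * (x-1) * (x^+(2*s-1) - 1)
     = (x-1) * (x^+s * x^+s - x * x^+(2*s-1)) by ring.
  by rewrite e subrr mulr0.
rewrite h in k.
apply: (mulfI (mulf_neq0 x0 x1)).
rewrite k; ring.
Qed.

Lemma revdir s j k : (2 <= s)%N -> j = ((2*s-1)*k)%N ->
  exists q, Gf s (2*j.+1) = q * Gf s 2.
Proof.
move=> s2 ->; set n := (2*s-1)%N.
have hphi := @phiE {poly int} 'X s s2 (negbT (@polyX_eq0 _)).
have hX1 : ('X - 1 : {poly int}) != 0 by rewrite -polyC1 polyXsubC_eq0.
have {}hphi := hphi hX1.
rewrite /Gf expr1.
set S := Sp s; set T := Sp s.-1.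
set A := S^+2; set B := 'X * T^+2.
have e1 : S ^+ (2 * (n*k).+1) = A ^+ (n*k).+1 by rewrite exprM.
have e2 : 'X ^+ (2 * (n * k).+1).-1 * T ^+ (2 * (n * k).+1) = 'X^(n*k) * B^+(n*k).+1.
  have -> : (2 * (n * k).+1).-1 = (n*k + (n*k).+1)%N by lia.
  by rewrite exprD -mulrA exprMn -exprM mulnC.
rewrite e1 e2.
have e3 : ('X^(n*k) - 1 : {poly int}) = ('X - 1) * (A - B) * \sum_(i < k) ('X^n) ^+ i.
  by rewrite /A /B /S /T /Sp hphi -subrX1 exprM.
set m := (n*k).+1.
exists (\sum_(i < m) A ^+ (m.-1 - i) * B ^+ i - ('X - 1) * (\sum_(i < k) ('X^n) ^+ i) * B^+m).
have -> : A ^+ m - 'X^(n*k) * B ^+ m = (A^+m - B^+m) - ('X^(n*k) - 1) * B^+m by ring.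
rewrite subrXX e3.
set U := \sum_(i < m) _; set V := \sum_(i < k) _.
ring.
Qed.

Lemma numE s p : (0 < s)%N -> (0 < p)%N -> Gnum s p = Gden p * G s p.
Proof.
move=> s0; case: p => // p _.
by rewrite GE // /Gnum /Gden key.
Qed.

Definition fi := map_poly (intr : int -> algC).
Lemma fiM a b : fi (a * b) = fi a * fi b.
Proof. exact: rmorphM. Qed.

Lemma eval_num (x : algC) s p : (fi (Gnum s p)).[x] = x*(x^+s-1)^+p - (x^+s-x)^+p.
Proof. by rewrite /fi /Gnum !(rmorphB, rmorphM, rmorphXn, rmorph1) /= map_polyX !hornerE. Qed.

Lemma eval_den (x : algC) p : (fi (Gden p)).[x] = x*(x-1)^+p.
Proof. by rewrite /fi /Gden !(rmorphB, rmorphM, rmorphXn, rmorph1) /= map_polyX !hornerE. Qed.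

Lemma fwd s p q : (2 <= s)%N -> (2 <= p)%N -> G s p = q * G s 2 ->
  (2 * (2 * s - 1) %| p - 2)%N.
Proof.
move=> s2 p2 Hq.
set n := (2 * s - 1)%N.
have n3 : (3 <= n)%N by rewrite /n; lia.
have [z pz] := @C_prim_root_exists (2 * n)%N (ltac:(lia)).
have z2n : z ^+ (2 * n) = 1 by apply: prim_expr_order.
have zn : z ^+ n = -1.
  have h : (z ^+ n - 1) * (z ^+ n + 1) = 0.
    by rewrite mulrDr mulr1 mulrBl mul1r -exprD addnn -mul2n z2n; ring.
  move/eqP: h; rewrite mulf_eq0 => /orP [|].
    rewrite subr_eq0 -(prim_order_dvd pz) => /dvdnP [k hk]; lia.
  by rewrite addr_eq0 => /eqP.
have z0 : z != 0.
  apply/negP => /eqP z0; move: z2n; rewrite z0 expr0n.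
  have -> : (2 * n == 0)%N = false by apply/negbTE; rewrite muln_eq0 /=; lia.
  by move/eqP; rewrite eq_sym oner_eq0.
have z21 : z ^+ 2 != 1.
  by rewrite -(prim_order_dvd pz); apply/negP => /dvdnP [k hk]; nia.
have z1 : 1 + z != 0.
  apply/negP; rewrite addr_eq0 => /eqP hz; move: z21; have -> : z = -1 by rewrite hz opprK.
  by rewrite sqrrN expr1n eqxx.
set w := z ^+ 2.
have ws : w ^+ s = - z.
  rewrite /w -exprM.
  have -> : (2 * s = n.+1)%N by rewrite /n; lia.
  by rewrite exprS zn mulrN1.
have numw : forall r, (0 < r)%N -> (fi (Gnum s r)).[w] = (- (1 + z)) ^+ r * (z ^+ 2 - z ^+ r).
  move=> r _; rewrite eval_num ws /w.
  have -> : - z - z ^+ 2 = z * (- (1 + z)) by ring.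
  have -> : - z - 1 = - (1 + z) by ring.
  rewrite exprMn; ring.
have denw : forall r, (fi (Gden r)).[w] != 0.
  move=> r; rewrite eval_den mulf_neq0 //; first exact: expf_neq0.
  by apply: expf_neq0; rewrite subr_eq0.
have G2 : (fi (G s 2)).[w] = 0.
  have := numw 2%N isT; rewrite subrr mulr0 numE ?(ltnW s2) // (fiM (Gden 2)) hornerM.
  by move/eqP; rewrite mulf_eq0 (negbTE (denw _)) /= => /eqP.
have Gp : (fi (G s p)).[w] = 0 by rewrite Hq (fiM q) hornerM G2 mulr0.
have := numw p (ltnW p2); rewrite numE ?(ltnW p2) ?(ltnW s2) // (fiM (Gden p)) hornerM Gp mulr0.
move/esym/eqP; rewrite mulf_eq0 expf_eq0 oppr_eq0 (negbTE z1) andbF /= subr_eq0.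
have -> : (p = (p - 2) + 2)%N by lia.
rewrite exprD -{1}[z ^+ 2]mul1r => /eqP /(mulIf (expf_neq0 2 z0)) /esym /eqP.
by rewrite addnK -(prim_order_dvd pz).
Qed.

Lemma a1 s p : (2 <= p)%N -> (p == 2 %[mod 2 * (2 * s - 1)]) = (2 * (2 * s - 1) %| p - 2)%N.
Proof. move=> p2. by rewrite eqn_mod_dvd // (ltnW p2). Qed.
Lemma a2 s p k : (p - 2)%N = (k * (2 * (2 * s - 1)))%N -> (2 <= p)%N -> p = (2 * ((2 * s - 1) * k).+1)%N.
Proof. move=> *. lia. Qed.
Lemma rev2 s k : (2 <= s)%N -> dvdZx (G s 2) (G s (2 * ((2 * s - 1) * k).+1)).
Proof.
move=> s2.
rewrite /dvdZx GE ?(ltnW s2) //.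
rewrite GE ?(ltnW s2) //.
exact: (@revdir s _ k s2 erefl).
Qed.
Lemma b1 s p : (2 <= s)%N -> (2 <= p)%N ->
  (dvdZx (G s 2) (G s p) -> p = 2 %[mod 2 * (2 * s - 1)]).
Proof.
move=> s2 p2 [q Hq]; apply/eqP; rewrite a1 //; exact: fwd Hq.
Qed.
Lemma b2 s p : (2 <= s)%N -> (2 <= p)%N ->
  (p = 2 %[mod 2 * (2 * s - 1)]) -> dvdZx (G s 2) (G s p).
Proof.
move=> s2 p2 /eqP; rewrite a1 // => /dvdnP [k hk].
rewrite (a2 _ _ _ hk p2); exact: rev2.
Qed.

Theorem proposition5 (s p : nat) :
  (2 <= s)%N -> (2 <= p)%N ->
  (dvdZx (G s 2) (G s p) <-> p = 2 %[mod 2 * (2 * s - 1)]).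
Proof.
move=> s2 p2; split; [exact: b1 | exact: b2].
Qed.
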